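(* Let $g:[a,b]\to\mathbb R$ be increasing, continuous at $a$ and at $b$, and left-continuous at every point of $(a,b)$. Let $f:[a,b]\to\mathbb R$ be $g$-Lipschitz continuous with Lipschitz constant $H$. If $g^C$ is Lipschitz continuous with Lipschitz constant $H$, then $f^C$ is Lipschitz continuous with Lipschitz constant $H^2$.
   Context: For a function $\varphi:[a,b]\to\mathbb R$ having right limits, $\Delta^+\varphi(t)=\varphi(t^+)-\varphi(t)$, its jump part is $\varphi^B(t)=\sum_{s\in[a,t)}\Delta^+\varphi(s)$ and its continuous part is $\varphi^C=\varphi-\varphi^B$. $f$ is $g$-Lipschitz continuous with constant $H$ if $|f(t)-f(s)|\le H|g(t)-g(s)|$ for all $t,s\in[a,b]$. *)

(* Defs.v *)
From Stdlib Require Import Reals Lra List.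
Import ListNotations.
Open Scope R_scope.

Definition right_limit (b : R) (phi : R -> R) (t L : R) : Prop :=
  forall eps, 0 < eps -> exists delta, 0 < delta /\
    forall s, t < s < t + delta -> s <= b -> Rabs (phi s - L) < eps.

(* Unconditional summation of the family (d s)_{s | P s} (possibly uncountable
   index set): S is the limit of the net of finite partial sums. *)
Definition has_sum_on (P : R -> Prop) (d : R -> R) (S : R) : Prop :=
  forall eps, 0 < eps -> exists F0 : list R, Forall P F0 /\
    forall F : list R, NoDup F -> Forall P F -> incl F0 F ->
      Rabs (fold_right Rplus 0 (map d F) - S) < eps.

(* J = phi^B(t) = sum_{s in [a,t)} Delta^+ phi(s), where Delta^+ phi(s) = phi(s^+) - phi(s)
   (the right limits at every s in [a,t) exist and the sum converges). *)
Definition jump_part (a b : R) (phi : R -> R) (t J : R) : Prop :=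
  exists d : R -> R,
    (forall s, a <= s < t -> right_limit b phi s (phi s + d s)) /\
    has_sum_on (fun s => a <= s < t) d J.

Definition lipschitz_on (a b : R) (F : R -> R) (H : R) : Prop :=
  forall t s, a <= t <= b -> a <= s <= b -> Rabs (F t - F s) <= H * Rabs (t - s).

Definition g_lipschitz_on (a b : R) (g f : R -> R) (H : R) : Prop :=
  forall t s, a <= t <= b -> a <= s <= b ->
    Rabs (f t - f s) <= H * Rabs (g t - g s).

(* phi^C = phi - phi^B is Lipschitz on [a,b] with constant H
   (including the existence of the jump part phi^B on [a,b]). *)
Definition cont_part_lipschitz (a b : R) (phi : R -> R) (H : R) : Prop :=
  exists phiB : R -> R,
    (forall t, a <= t <= b -> jump_part a b phi t (phiB t)) /\
    lipschitz_on a b (fun t => phi t - phiB t) H.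

Definition nondecreasing_on (a b : R) (g : R -> R) : Prop :=
  forall s t, a <= s -> s <= t -> t <= b -> g s <= g t.

Definition right_cont_at (a b : R) (g : R -> R) (x : R) : Prop :=
  forall eps, 0 < eps -> exists delta, 0 < delta /\
    forall s, a <= s <= b -> x <= s < x + delta -> Rabs (g s - g x) < eps.

Definition left_cont_at (a b : R) (g : R -> R) (x : R) : Prop :=
  forall eps, 0 < eps -> exists delta, 0 < delta /\
    forall s, a <= s <= b -> x - delta < s <= x -> Rabs (g s - g x) < eps.

(* Main.v *)
Require Import Defs.
From Stdlib Require Import Reals Lra Lia List Classical ClassicalEpsilon.
Import ListNotations.
Open Scope R_scope.

Definition sm (d : R -> R) (F : list R) := fold_right Rplus 0 (map d F).

Lemma sm_app d A B : sm d (A ++ B) = sm d A + sm d B.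
Proof. induction A; unfold sm in *; simpl; [lra|]. rewrite IHA; lra. Qed.

Lemma sm_cons d x A : sm d (x :: A) = d x + sm d A.
Proof. reflexivity. Qed.

Lemma sm_minus d1 d2 F : sm (fun s => d1 s - d2 s) F = sm d1 F - sm d2 F.
Proof. induction F; unfold sm in *; simpl; [lra|]. rewrite IHF; lra. Qed.

Lemma sm_ext (P : R -> Prop) d1 d2 F : (forall s, P s -> d1 s = d2 s) -> Forall P F ->
  sm d1 F = sm d2 F.
Proof. intros He HF; induction HF; unfold sm in *; simpl; [lra|]. rewrite IHHF, He; auto. Qed.

Lemma sm_nonneg (P : R -> Prop) d F : (forall s, P s -> 0 <= d s) -> Forall P F -> 0 <= sm d F.
Proof. intros He HF; induction HF; unfold sm in *; simpl; [lra|]. specialize (He x H); lra. Qed.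

Lemma sm_le (P : R -> Prop) d1 d2 F : (forall s, P s -> d1 s <= d2 s) -> Forall P F ->
  sm d1 F <= sm d2 F.
Proof. intros He HF; induction HF; unfold sm in *; simpl; [lra|]. specialize (He x H); lra. Qed.

Lemma sm_abs (P : R -> Prop) d F : Forall P F -> Rabs (sm d F) <= sm (fun s => Rabs (d s)) F.
Proof. intros HF; induction HF; unfold sm in *; simpl. rewrite Rabs_R0; lra.
  eapply Rle_trans; [apply Rabs_triang|]. lra. Qed.

Lemma sm_remove d x A B : sm d (A ++ x :: B) = d x + sm d (A ++ B).
Proof. rewrite !sm_app, sm_cons; lra. Qed.

Lemma sm_filter d (p : R -> bool) F : sm d F = sm d (filter p F) + sm d (filter (fun x => negb (p x)) F).
Proof. induction F; unfold sm in *; simpl; [lra|]. destruct (p a); simpl; rewrite IHF; lra. Qed.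

Lemma sub_sum (P : R -> Prop) d F0 : NoDup F0 -> forall F, NoDup F -> incl F0 F ->
  Forall P F -> (forall s, P s -> 0 <= d s) -> sm d F0 <= sm d F.
Proof.
  induction 1 as [|x F0' Hx HN IH]; intros F HF Hi HP Hd.
  - unfold sm; simpl. eapply sm_nonneg; eauto.
  - assert (In x F) by (apply Hi; simpl; auto).
    destruct (in_split _ _ H) as [A [B ->]].
    rewrite sm_remove, sm_cons.
    assert (P x) by (rewrite Forall_forall in HP; apply HP, in_or_app; simpl; auto).
    assert (sm d F0' <= sm d (A ++ B)); [|lra].
    apply IH. eapply NoDup_remove_1; eauto.
    intros y Hy. assert (In y (A ++ x :: B)) by (apply Hi; simpl; auto).
    apply in_app_or in H1; apply in_or_app. destruct H1 as [|[|]]; auto. subst; tauto.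
    rewrite Forall_forall in *. intros y Hy; apply HP. apply in_app_or in Hy; apply in_or_app; simpl; tauto.
    auto.
Qed.

Definition dedup (F : list R) := nodup Req_dec_T F.

Lemma dedup_NoDup F : NoDup (dedup F). Proof. apply NoDup_nodup. Qed.
Lemma dedup_In F x : In x (dedup F) <-> In x F. Proof. apply nodup_In. Qed.

Lemma has_sum_ext (P : R -> Prop) d1 d2 S : (forall s, P s -> d1 s = d2 s) ->
  has_sum_on P d1 S -> has_sum_on P d2 S.
Proof.
  intros He Hs eps Heps. destruct (Hs eps Heps) as [F0 [HF0 HF]]. exists F0; split; auto.
  intros F HN HP Hi. change (Rabs (sm d2 F - S) < eps).
  rewrite <- (sm_ext P d1 d2 F He HP). apply HF; auto.
Qed.

Lemma has_sum_minus (P : R -> Prop) d1 d2 S1 S2 : has_sum_on P d1 S1 -> has_sum_on P d2 S2 ->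
  has_sum_on P (fun s => d1 s - d2 s) (S1 - S2).
Proof.
  intros H1 H2 eps Heps.
  destruct (H1 (eps/2)) as [F1 [HP1 HF1]]; [lra|].
  destruct (H2 (eps/2)) as [F2 [HP2 HF2]]; [lra|].
  exists (F1 ++ F2); split. apply Forall_app; auto.
  intros F HN HP Hi. change (Rabs (sm (fun s => d1 s - d2 s) F - (S1 - S2)) < eps).
  rewrite sm_minus.
  assert (A1 := HF1 F HN HP (fun x h => Hi x (in_or_app _ _ _ (or_introl h)))).
  assert (A2 := HF2 F HN HP (fun x h => Hi x (in_or_app _ _ _ (or_intror h)))).
  change (Rabs (sm d1 F - S1) < eps/2) in A1. change (Rabs (sm d2 F - S2) < eps/2) in A2.
  apply Rabs_def2 in A1; apply Rabs_def2 in A2. apply Rabs_def1; lra.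
Qed.

Lemma sum_le_total (P : R -> Prop) k K F : (forall s, P s -> 0 <= k s) -> has_sum_on P k K ->
  NoDup F -> Forall P F -> sm k F <= K.
Proof.
  intros Hk Hs HN HP. apply Rle_plus_epsilon; intros eps Heps.
  destruct (Hs eps Heps) as [F0 [HP0 HF]].
  set (G := dedup (F ++ F0)).
  assert (HG : NoDup G) by apply dedup_NoDup.
  assert (HGP : Forall P G). { apply Forall_forall; intros x Hx. apply dedup_In, in_app_or in Hx.
    rewrite Forall_forall in *; destruct Hx; auto. }
  assert (A := HF G HG HGP (fun x h => proj2 (dedup_In _ _) (in_or_app _ _ _ (or_intror h)))).
  change (Rabs (sm k G - K) < eps) in A. apply Rabs_def2 in A.
  assert (sm k F <= sm k G). { eapply sub_sum; eauto. intros x h; apply dedup_In, in_or_app; auto. }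
  lra.
Qed.

Lemma nonneg_summable (P : R -> Prop) h k K : (forall s, P s -> 0 <= h s) ->
  (forall s, P s -> h s <= k s) -> has_sum_on P k K -> exists S, has_sum_on P h S.
Proof.
  intros Hh Hhk Hs.
  set (E := fun y => exists F, NoDup F /\ Forall P F /\ y = sm h F).
  assert (Hb : bound E). { exists K. intros y [F [HN [HP ->]]].
    eapply Rle_trans; [eapply sm_le; eauto|]. eapply sum_le_total; eauto.
    intros s Ps; specialize (Hh s Ps); specialize (Hhk s Ps); lra. }
  assert (He : exists y, E y) by (exists 0; exists []; repeat split; constructor).
  destruct (completeness E Hb He) as [S [HS1 HS2]].
  exists S. intros eps Heps.
  assert (exists F, NoDup F /\ Forall P F /\ S - eps < sm h F) as [F0 [HN0 [HP0 Hlt]]].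
  { apply Classical_Prop.NNPP; intro C. assert (S <= S - eps); [|lra].
    apply HS2. intros y [F [HN [HP ->]]]. apply Rnot_lt_le; intro; apply C; exists F; auto. }
  exists F0; split; auto. intros F HN HP Hi. change (Rabs (sm h F - S) < eps).
  assert (sm h F0 <= sm h F) by (eapply sub_sum; eauto).
  assert (sm h F <= S) by (apply HS1; exists F; auto).
  apply Rabs_def1; lra.
Qed.

Lemma pick_point (u b d1 d2 : R) : u < b -> 0 < d1 -> 0 < d2 ->
  exists v, u < v < u + d1 /\ u < v < u + d2 /\ v <= b.
Proof.
  intros. exists (u + Rmin (Rmin d1 d2) (b - u) / 2).
  assert (0 < Rmin (Rmin d1 d2) (b-u)) by (repeat apply Rmin_glb_lt; lra).
  assert (Rmin (Rmin d1 d2) (b-u) <= Rmin d1 d2) by apply Rmin_l.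
  assert (Rmin (Rmin d1 d2) (b-u) <= b - u) by apply Rmin_r.
  assert (Rmin d1 d2 <= d1) by apply Rmin_l. assert (Rmin d1 d2 <= d2) by apply Rmin_r.
  lra.
Qed.

Lemma rl_unique b phi u L1 L2 : u < b -> right_limit b phi u L1 -> right_limit b phi u L2 -> L1 = L2.
Proof.
  intros Hu H1 H2.
  assert (Rabs (L1 - L2) <= 0).
  { apply Rle_plus_epsilon; intros eps He.
    destruct (H1 (eps/2)) as [d1 [Hd1 A1]]; [lra|]. destruct (H2 (eps/2)) as [d2 [Hd2 A2]]; [lra|].
    destruct (pick_point u b d1 d2) as [v [V1 [V2 V3]]]; auto.
    specialize (A1 v V1 V3); specialize (A2 v V2 V3).
    apply Rabs_def2 in A1; apply Rabs_def2 in A2. apply Rabs_le; lra. }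
  assert (0 <= Rabs (L1 - L2)) by apply Rabs_pos.
  assert (Rabs (L1 - L2) = 0) by lra.
  destruct (Rcase_abs (L1 - L2)); [rewrite Rabs_left in H3 | rewrite Rabs_right in H3]; lra.
Qed.

Lemma rl_opp b phi u L : right_limit b phi u L -> right_limit b (fun x => - phi x) u (- L).
Proof.
  intros Hl eps He. destruct (Hl eps He) as [d [Hd A]]. exists d; split; auto.
  intros s Hs Hb. specialize (A s Hs Hb). replace (- phi s - - L) with (- (phi s - L)) by ring.
  rewrite Rabs_Ropp; auto.
Qed.

Lemma lim_ineq (b u H Lf Lg c e d0 : R) (f g : R -> R) : 0 <= H -> u < b -> 0 < d0 ->
  right_limit b f u Lf -> right_limit b g u Lg ->
  (forall v, u < v < u + d0 -> v <= b -> 0 <= e - g v /\ Rabs (c - f v) <= H * (e - g v)) ->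
  0 <= e - Lg /\ Rabs (c - Lf) <= H * (e - Lg).
Proof.
  intros HH Hu Hd0 Hf Hg Hv.
  assert (K : forall eps, 0 < eps -> 0 <= e - Lg + eps /\ Rabs (c - Lf) <= H * (e - Lg) + (H + 1) * eps).
  { intros eps He.
    destruct (Hf eps He) as [d1 [Hd1 A1]]. destruct (Hg eps He) as [d2 [Hd2 A2]].
    destruct (pick_point u b d1 (Rmin d0 d2)) as [v [V1 [V2 V3]]]; auto.
    apply Rmin_glb_lt; auto.
    assert (Rmin d0 d2 <= d0) by apply Rmin_l. assert (Rmin d0 d2 <= d2) by apply Rmin_r.
    specialize (A1 v V1 V3). assert (A2' := A2 v ltac:(lra) V3). destruct (Hv v ltac:(lra) V3) as [B1 B2].
    apply Rabs_def2 in A1; apply Rabs_def2 in A2'. split. lra.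
    replace (c - Lf) with ((c - f v) + (f v - Lf)) by ring.
    eapply Rle_trans; [apply Rabs_triang|].
    assert (Rabs (f v - Lf) <= eps) by (apply Rabs_le; lra).
    assert (H * (e - g v) <= H * (e - Lg + eps)) by (apply Rmult_le_compat_l; lra). nra. }
  split.
  - apply Rle_plus_epsilon; intros eps He. destruct (K eps He); lra.
  - apply Rle_plus_epsilon; intros eps He. destruct (K (eps / (H+1))) as [_ K2].
    apply Rdiv_lt_0_compat; lra. replace ((H + 1) * (eps / (H + 1))) with eps in K2 by (field; lra). lra.
Qed.

Lemma list_min (L : list R) : L <> [] -> exists u, In u L /\ forall x, In x L -> u <= x.
Proof.
  induction L as [|y L IH]; intro Hn; [congruence|].
  destruct L as [|z L'].
  - exists y; split; [simpl; auto|]. intros x [<-|[]]; lra.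
  - destruct IH as [m [Hm1 Hm2]]; [congruence|].
    destruct (Rle_dec y m).
    + exists y; split; [simpl; auto|]. intros x [<-|Hx]; [lra|]. specialize (Hm2 x Hx); lra.
    + exists m; split; [simpl; auto|]. intros x [<-|Hx]; [lra|]. auto.
Qed.

Lemma list_gap (u t : R) (L : list R) : u < t -> (forall x, In x L -> u < x) ->
  exists m, u < m <= t /\ forall x, In x L -> m <= x.
Proof.
  induction L as [|y L IH]; intros Hut Hx.
  - exists t; split; [lra|]. intros x [].
  - destruct IH as [m [Hm1 Hm2]]; auto. intros x h; apply Hx; simpl; auto.
    assert (u < y) by (apply Hx; simpl; auto).
    exists (Rmin m y). split. split. apply Rmin_glb_lt; lra. assert (Rmin m y <= m) by apply Rmin_l; lra.
    intros x [<-|h]. apply Rmin_r. specialize (Hm2 x h). assert (Rmin m y <= m) by apply Rmin_l; lra.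
Qed.

Lemma key (a b H : R) (f g df dg : R -> R) :
  nondecreasing_on a b g -> g_lipschitz_on a b g f H -> 0 <= H ->
  (forall u, a <= u < b -> right_limit b f u (f u + df u)) ->
  (forall u, a <= u < b -> right_limit b g u (g u + dg u)) ->
  forall n L s t, (length L <= n)%nat -> a <= s -> s <= t -> t <= b -> NoDup L ->
   (forall x, In x L -> s <= x < t) ->
   0 <= g t - g s - sm dg L /\ Rabs (f t - f s - sm df L) <= H * (g t - g s - sm dg L).
Proof.
  intros Hm Hgl HH Hrf Hrg n. induction n as [|n IH]; intros L s t Hlen Has Hst Htb HN HL.
  - destruct L; [|simpl in Hlen; lia]. unfold sm; simpl.
    assert (g s <= g t) by (apply Hm; lra).
    assert (A := Hgl t s ltac:(lra) ltac:(lra)). rewrite (Rabs_right (g t - g s)) in A by lra.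
    split; [lra|]. replace (f t - f s - 0) with (f t - f s) by ring. lra.
  - destruct L as [|y L0].
    + apply (IH []); simpl; auto; lia.
    + destruct (list_min (y :: L0)) as [u [Hu1 Hu2]]; [congruence|].
      destruct (in_split _ _ Hu1) as [A [B HAB]]. rewrite HAB in *.
      rewrite !sm_remove.
      assert (HN' : NoDup (A ++ B)) by (eapply NoDup_remove_1; eauto).
      assert (Hnu : ~ In u (A ++ B)) by (eapply NoDup_remove_2; eauto).
      assert (HuL := HL u ltac:(apply in_or_app; simpl; auto)).
      assert (Hin : forall x, In x (A ++ B) -> In x (A ++ u :: B)).
      { intros x h; apply in_app_or in h; apply in_or_app; simpl; tauto. }
      assert (Hgt : forall x, In x (A ++ B) -> u < x).
      { intros x h. assert (u <= x) by (apply Hu2, Hin, h). destruct (Req_dec u x); [subst; tauto|lra]. }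
      destruct (list_gap u t (A ++ B)) as [m [Hm1 Hm2]]; [lra|auto|].
      assert (Hlen' : (length (A ++ B) <= n)%nat).
      { rewrite length_app; rewrite length_app in Hlen; simpl in Hlen; lia. }
      assert (C := lim_ineq b u H (f u + df u) (g u + dg u) (f t - sm df (A ++ B)) (g t - sm dg (A ++ B))
                   (m - u) f g HH ltac:(lra) ltac:(lra) (Hrf u ltac:(lra)) (Hrg u ltac:(lra))).
      destruct C as [C1 C2].
      { intros v Hv Hvb. destruct (IH (A ++ B) v t Hlen' ltac:(lra) ltac:(lra) Htb HN') as [D1 D2].
        intros x h. assert (HxL := HL x (Hin x h)). specialize (Hm2 x h). lra.
        split. lra. replace (f t - sm df (A ++ B) - f v) with (f t - f v - sm df (A ++ B)) by ring.
        replace (g t - sm dg (A ++ B) - g v) with (g t - g v - sm dg (A ++ B)) by ring. auto. }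
      assert (g s <= g u) by (apply Hm; lra).
      assert (E := Hgl u s ltac:(lra) ltac:(lra)). rewrite (Rabs_right (g u - g s)) in E by lra.
      split. lra.
      replace (f t - f s - (df u + sm df (A ++ B))) with ((f u - f s) + (f t - sm df (A ++ B) - (f u + df u))) by ring.
      eapply Rle_trans; [apply Rabs_triang|]. nra.
Qed.

Lemma seq_props (u b : R) : u < b -> forall n, u < u + (b - u) / (INR n + 1) <= b.
Proof.
  intros Hub n. assert (0 <= INR n) by apply pos_INR.
  assert (0 < (b - u) / (INR n + 1)) by (apply Rdiv_lt_0_compat; lra).
  split; [lra|]. assert ((b - u) / (INR n + 1) <= b - u); [|lra].
  unfold Rdiv. rewrite <- (Rmult_1_r (b-u)) at 2. apply Rmult_le_compat_l; [lra|].
  rewrite <- Rinv_1. apply Rinv_le_contravar; lra.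
Qed.

Lemma seq_small (u b d : R) : u < b -> 0 < d -> exists N, forall n, (n >= N)%nat ->
  u + (b - u) / (INR n + 1) < u + d.
Proof.
  intros Hub Hd. destruct (INR_archimed d (b - u) Hd) as [N HN]. exists N. intros n Hn.
  apply le_INR in Hn. assert (0 <= INR N) by apply pos_INR.
  assert ((b - u) < (INR n + 1) * d) by nra.
  assert ((b - u) / (INR n + 1) < d); [|lra].
  apply (Rmult_lt_reg_r (INR n + 1)); [lra|]. unfold Rdiv. rewrite Rmult_assoc, Rinv_l by lra. lra.
Qed.

Lemma f_rl_exists a b H f g u Lg : 0 <= H -> g_lipschitz_on a b g f H -> a <= u < b ->
  right_limit b g u Lg -> exists Lf, right_limit b f u Lf.
Proof.
  intros HH Hgl Hu Hg.
  assert (Cc : forall eps, 0 < eps -> exists d, 0 < d /\ forall v w, u < v < u + d -> v <= b ->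
            u < w < u + d -> w <= b -> Rabs (f v - f w) < eps).
  { intros eps He. destruct (Hg (eps / (2 * (H + 1)))) as [d [Hd A]].
    apply Rdiv_lt_0_compat; lra. exists d; split; auto. intros v w Hv Hvb Hw Hwb.
    assert (B := Hgl v w ltac:(lra) ltac:(lra)).
    specialize (A v Hv Hvb) as A1. specialize (A w Hw Hwb) as A2.
    assert (Rabs (g v - g w) < eps / (H+1)).
    { replace (g v - g w) with ((g v - Lg) - (g w - Lg)) by ring.
      eapply Rle_lt_trans; [apply Rabs_triang|]. rewrite Rabs_Ropp.
      replace (eps / (H+1)) with (eps / (2 * (H+1)) + eps / (2 * (H+1))) by (field; lra). lra. }
    assert (H * Rabs (g v - g w) <= H * (eps / (H+1))) by (apply Rmult_le_compat_l; lra).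
    assert (H * (eps / (H+1)) < eps).
    { replace (H * (eps / (H+1))) with (eps * (H / (H+1))) by (field; lra).
      assert (H / (H+1) < 1). { apply (Rmult_lt_reg_r (H+1)); [lra|]. unfold Rdiv. rewrite Rmult_assoc, Rinv_l by lra. lra. }
      nra. }
    lra. }
  set (w := fun n : nat => u + (b - u) / (INR n + 1)).
  assert (Hw := seq_props u b ltac:(lra)).
  assert (Cauchy_crit (fun n => f (w n))).
  { intros eps He. destruct (Cc eps He) as [d [Hd A]]. destruct (seq_small u b d ltac:(lra) Hd) as [N HN].
    exists N. intros n m Hn Hm. unfold R_dist. specialize (Hw n) as W1; specialize (Hw m) as W2.
    apply A; unfold w; try lra. specialize (HN n Hn); lra. specialize (HN m Hm); lra. }
  destruct (R_complete _ H0) as [l Hl]. exists l.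
  intros eps He. destruct (Cc (eps/2)) as [d [Hd A]]; [lra|].
  destruct (seq_small u b d ltac:(lra) Hd) as [N1 HN1]. destruct (Hl (eps/2)) as [N2 HN2]; [lra|].
  exists d; split; auto. intros s Hs Hsb.
  set (n := max N1 N2). specialize (HN1 n ltac:(lia)). specialize (HN2 n ltac:(lia)). unfold R_dist in HN2.
  specialize (Hw n). assert (A' := A s (w n) Hs Hsb ltac:(unfold w in *; lra) ltac:(unfold w in *; lra)).
  replace (f s - l) with ((f s - f (w n)) + (f (w n) - l)) by ring.
  eapply Rle_lt_trans; [apply Rabs_triang|]. lra.
Qed.

Lemma sm_scale c d F : sm (fun s => c * d s) F = c * sm d F.
Proof. induction F; unfold sm in *; simpl; [ring|]. rewrite IHF; ring. Qed.

Lemma has_sum_scale (P : R -> Prop) c d S : has_sum_on P d S -> has_sum_on P (fun s => c * d s) (c * S).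
Proof.
  intros Hs eps He. destruct (Hs (eps / (Rabs c + 1))) as [F0 [HP0 HF]].
  { apply Rdiv_lt_0_compat; [lra|]. assert (0 <= Rabs c) by apply Rabs_pos; lra. }
  exists F0; split; auto. intros F HN HP Hi. change (Rabs (sm (fun s => c * d s) F - c * S) < eps).
  rewrite sm_scale. replace (c * sm d F - c * S) with (c * (sm d F - S)) by ring. rewrite Rabs_mult.
  specialize (HF F HN HP Hi). change (Rabs (sm d F - S) < eps / (Rabs c + 1)) in HF.
  assert (0 <= Rabs c) by apply Rabs_pos.
  assert (Rabs c * Rabs (sm d F - S) <= Rabs c * (eps / (Rabs c + 1))) by (apply Rmult_le_compat_l; lra).
  assert (Rabs c * (eps / (Rabs c + 1)) < eps); [|lra].
  replace (Rabs c * (eps / (Rabs c + 1))) with (eps - eps / (Rabs c + 1)) by (field; lra).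
  assert (0 < eps / (Rabs c + 1)) by (apply Rdiv_lt_0_compat; lra). lra.
Qed.

Theorem mainTheorem6 (a b H : R) (g f : R -> R) :
  nondecreasing_on a b g ->
  right_cont_at a b g a ->
  left_cont_at a b g b ->
  (forall x, a < x < b -> left_cont_at a b g x) ->
  g_lipschitz_on a b g f H ->
  cont_part_lipschitz a b g H ->
  cont_part_lipschitz a b f (H ^ 2).
Proof.
  intros Hm _ _ _ Hgl [gB [HgB HgL]].
  destruct (Rlt_or_le a b) as [Hab|Hab]; cycle 1.
  { exists (fun _ => 0). split.
    - intros t Ht. exists (fun _ => 0). split. intros; lra.
      intros eps He. exists []; split; [constructor|]. intros F HN HP Hi.
      destruct F as [|x F]. simpl; rewrite Rminus_0_r, Rabs_R0; lra.
      apply Forall_inv in HP; lra.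
    - intros t s Ht Hs. replace t with s by lra. rewrite !Rminus_diag, Rabs_R0.
      simpl; lra. }
  assert (HH : 0 <= H).
  { assert (A := HgL a b ltac:(lra) ltac:(lra)).
    assert (0 <= Rabs ((g a - gB a) - (g b - gB b))) by apply Rabs_pos.
    rewrite (Rabs_left (a - b)) in A by lra. nra. }
  destruct (HgB b ltac:(lra)) as [dg [Hrg HsB]].
  assert (HgS : forall t, a <= t <= b -> has_sum_on (fun s => a <= s < t) dg (gB t)).
  { intros t Ht. destruct (HgB t Ht) as [d [Hr Hs]]. eapply has_sum_ext; [|exact Hs].
    intros s Hs'. assert (E := rl_unique b g s _ _ ltac:(lra) (Hr s Hs') (Hrg s ltac:(lra))). lra. }
  assert (X : forall u, {L | a <= u < b -> right_limit b f u L}).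
  { intro u. apply constructive_indefinite_description.
    destruct (classic (a <= u < b)) as [Hu|Hu].
    - destruct (f_rl_exists a b H f g u _ HH Hgl Hu (Hrg u ltac:(lra))) as [L HL]. exists L; auto.
    - exists 0; tauto. }
  set (df := fun u => proj1_sig (X u) - f u).
  assert (Hrf : forall u, a <= u < b -> right_limit b f u (f u + df u)).
  { intros u Hu. unfold df. replace (f u + (proj1_sig (X u) - f u)) with (proj1_sig (X u)) by ring.
    apply (proj2_sig (X u)); auto. }
  assert (Hjb : forall u, a <= u < b -> 0 <= dg u /\ Rabs (df u) <= H * dg u).
  { intros u Hu.
    assert (C := lim_ineq b u H (- (f u + df u)) (- (g u + dg u)) (- f u) (- g u) (b - u)
                 (fun x => - f x) (fun x => - g x) HH ltac:(lra) ltac:(lra)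
                 (rl_opp _ _ _ _ (Hrf u Hu)) (rl_opp _ _ _ _ (Hrg u Hu))).
    destruct C as [C1 C2].
    { intros v Hv Hvb. assert (g u <= g v) by (apply Hm; lra).
      assert (A := Hgl v u ltac:(lra) ltac:(lra)). rewrite (Rabs_right (g v - g u)) in A by lra.
      split. lra. replace (- f u - - f v) with (f v - f u) by ring. lra. }
    split. lra. replace (- f u - - (f u + df u)) with (df u) in C2 by ring. lra. }
  assert (HfS : forall t, a <= t <= b -> exists S, has_sum_on (fun s => a <= s < t) df S).
  { intros t Ht.
    assert (Hk := has_sum_scale _ H _ _ (HgS t Ht)).
    destruct (nonneg_summable (fun s => a <= s < t) (fun s => Rmax (df s) 0) (fun s => H * dg s) (H * gB t))
      as [Sp Hp]; auto.
    { intros; apply Rmax_r. }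
    { intros s Hs. destruct (Hjb s ltac:(lra)). unfold Rmax; destruct (Rle_dec (df s) 0);
      [nra|]. assert (df s <= Rabs (df s)) by apply RRle_abs. lra. }
    destruct (nonneg_summable (fun s => a <= s < t) (fun s => Rmax (- df s) 0) (fun s => H * dg s) (H * gB t))
      as [Sn Hn]; auto.
    { intros; apply Rmax_r. }
    { intros s Hs. destruct (Hjb s ltac:(lra)). unfold Rmax; destruct (Rle_dec (- df s) 0);
      [nra|]. assert (- df s <= Rabs (df s)) by (rewrite <- Rabs_Ropp; apply RRle_abs). lra. }
    exists (Sp - Sn). eapply has_sum_ext; [|exact (has_sum_minus _ _ _ _ _ Hp Hn)].
    intros s _. unfold Rmax; destruct (Rle_dec (df s) 0); destruct (Rle_dec (- df s) 0); lra. }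
  assert (Y : forall t, {J | a <= t <= b -> has_sum_on (fun s => a <= s < t) df J}).
  { intro t. apply constructive_indefinite_description.
    destruct (classic (a <= t <= b)) as [Ht|Ht].
    - destruct (HfS t Ht) as [S HS]; exists S; auto.
    - exists 0; tauto. }
  set (fB := fun t => proj1_sig (Y t)).
  assert (HfB : forall t, a <= t <= b -> has_sum_on (fun s => a <= s < t) df (fB t)).
  { intros t Ht; apply (proj2_sig (Y t)); auto. }
  assert (Cl : forall s t, a <= s -> s <= t -> t <= b ->
            Rabs ((f t - fB t) - (f s - fB s)) <= H * ((g t - gB t) - (g s - gB s))).
  { intros s t Has Hst Htb. apply Rle_plus_epsilon; intros eps He.
    set (e := eps / (2 * H + 2)).
    assert (He' : 0 < e) by (apply Rdiv_lt_0_compat; lra).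
    destruct (HfB t ltac:(lra) e He') as [F1 [P1 A1]].
    destruct (HgS t ltac:(lra) e He') as [F2 [P2 A2]].
    destruct (HfB s ltac:(lra) e He') as [F3 [P3 A3]].
    destruct (HgS s ltac:(lra) e He') as [F4 [P4 A4]].
    set (F := dedup (F1 ++ F2 ++ F3 ++ F4)).
    assert (HN : NoDup F) by apply dedup_NoDup.
    assert (HFi : forall x, In x F -> a <= x < t).
    { intros x Hx. unfold F in Hx. apply (proj1 (dedup_In _ _)) in Hx. rewrite Forall_forall in P1, P2, P3, P4.
      apply in_app_or in Hx; destruct Hx as [Hx|Hx]; [apply P1; auto|].
      apply in_app_or in Hx; destruct Hx as [Hx|Hx]; [apply P2; auto|].
      apply in_app_or in Hx; destruct Hx as [Hx|Hx]; [specialize (P3 x Hx)|specialize (P4 x Hx)]; lra. }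
    assert (HP : Forall (fun s => a <= s < t) F) by (apply Forall_forall; auto).
    assert (Hinc : forall x, In x F1 \/ In x F2 \/ In x F3 \/ In x F4 -> In x F).
    { intros x Hx. unfold F. apply (proj2 (dedup_In _ _)). repeat (apply in_or_app; destruct Hx as [Hx|Hx]; [left; auto|right]). auto. }
    set (p := fun x => if Rlt_dec x s then true else false).
    set (Fs := filter p F). set (Ft := filter (fun x => negb (p x)) F).
    assert (HNs : NoDup Fs) by (apply NoDup_filter; auto).
    assert (HNt : NoDup Ft) by (apply NoDup_filter; auto).
    assert (HPs : Forall (fun x => a <= x < s) Fs).
    { apply Forall_forall; intros x Hx. apply filter_In in Hx as [Hx Hp]. unfold p in Hp.
      destruct (Rlt_dec x s); [|discriminate]. specialize (HFi x Hx); lra. }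
    assert (Hts : forall x, In x Ft -> s <= x < t).
    { intros x Hx. apply filter_In in Hx as [Hx Hp]. unfold p in Hp.
      destruct (Rlt_dec x s); [discriminate|]. specialize (HFi x Hx); lra. }
    assert (Hi3 : incl F3 Fs).
    { intros x Hx. apply filter_In; split. apply Hinc; tauto. rewrite Forall_forall in P3.
      specialize (P3 x Hx). unfold p; destruct (Rlt_dec x s); auto; lra. }
    assert (Hi4 : incl F4 Fs).
    { intros x Hx. apply filter_In; split. apply Hinc; tauto. rewrite Forall_forall in P4.
      specialize (P4 x Hx). unfold p; destruct (Rlt_dec x s); auto; lra. }
    specialize (A1 F HN HP (fun x h => Hinc x (or_introl h))).
    specialize (A2 F HN HP (fun x h => Hinc x (or_intror (or_introl h)))).
    specialize (A3 Fs HNs HPs Hi3). specialize (A4 Fs HNs HPs Hi4).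
    change (Rabs (sm df F - fB t) < e) in A1. change (Rabs (sm dg F - gB t) < e) in A2.
    change (Rabs (sm df Fs - fB s) < e) in A3. change (Rabs (sm dg Fs - gB s) < e) in A4.
    rewrite (sm_filter df p F) in A1. rewrite (sm_filter dg p F) in A2. fold Fs Ft in A1, A2.
    destruct (key a b H f g df dg Hm Hgl HH Hrf Hrg (length Ft) Ft s t (le_n _) Has Hst Htb HNt Hts)
      as [K1 K2].
    apply Rabs_def2 in A1; apply Rabs_def2 in A2; apply Rabs_def2 in A3; apply Rabs_def2 in A4.
    replace ((f t - fB t) - (f s - fB s)) with
      ((f t - f s - sm df Ft) + ((sm df Fs + sm df Ft - fB t) - (sm df Fs - fB s))) by ring.
    eapply Rle_trans; [apply Rabs_triang|].
    assert (Rabs ((sm df Fs + sm df Ft - fB t) - (sm df Fs - fB s)) <= 2 * e) by (apply Rabs_le; lra).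
    assert (H * (g t - g s - sm dg Ft) <= H * ((g t - gB t) - (g s - gB s)) + H * (2 * e))
      by (rewrite <- Rmult_plus_distr_l; apply Rmult_le_compat_l; lra).
    assert (eps = (2 * H + 2) * e) by (unfold e; field; lra). nra. }
  exists fB. split.
  - intros t Ht. exists df. split; [|apply HfB; auto]. intros s Hs; apply Hrf; lra.
  - intros t s Ht Hs. simpl. rewrite Rmult_1_r.
    assert (Gen : forall s t, a <= s <= b -> a <= t <= b -> s <= t ->
       Rabs ((f t - fB t) - (f s - fB s)) <= H * H * Rabs (t - s)).
    { intros s0 t0 Hs0 Ht0 Hle. eapply Rle_trans; [apply Cl; lra|].
      assert (A := HgL t0 s0 Ht0 Hs0).
      assert (B := RRle_abs ((g t0 - gB t0) - (g s0 - gB s0))). nra. }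
    destruct (Rle_dec s t). apply Gen; auto.
    rewrite Rabs_minus_sym, (Rabs_minus_sym t s). apply Gen; auto; lra.
Qed.
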